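(* Assume the Objectivity Assumption (for every paper $a$, all reviewers give $a$ the same score vector). Let $p,q \in (1,\infty)$. Then the $L(p,q)$-aggregation method satisfies Consensus. If moreover $p=q$ (so $p=q>1$), the $L(p,q)$-aggregation method satisfies Consistency.
   Context: Peer-review setting: a finite set $\mathcal{R}$ of $n$ reviewers, a finite set $\mathcal{P}$ of $m$ papers, and $d\ge 1$ evaluation criteria. Every reviewer $i$ reviews every paper $a$, giving a score vector $\bar{x}_{ia}\in[0,10]^d$ and a recommendation $y_{ia}\in[0,10]$. A function $h:[0,10]^d\to[0,10]$ is monotonic if $\bar x\le \bar y$ componentwise implies $h(\bar x)\le h(\bar y)$. Each reviewer $i$ has a monotonic $h_i$ with $y_{ia}=h_i(\bar x_{ia})$ for all $a$. The $L(p,q)$-aggregation method ($p,q\in[1,\infty)$): (1) ERM step: find a monotonic $\hat h:[0,10]^d\to[0,10]$ minimizing $\big[\sum_{i\in\mathcal{R}}\big(\sum_{a\in\mathcal{P}}|y_{ia}-h(\bar x_{ia})|^p\big)^{q/p}\big]^{1/q}$ over all monotonic $h$ (only the finitely many values $h(\bar x_{ia})$ matter); among minimizers, the one whose value vector $(\hat h(\bar x_{ia}))_{i,a}$ has smallest Euclidean norm is chosen. Put $\hat y_{ia}=\hat h(\bar x_{ia})$. (2) Aggregation step: the solution $(s_a)_{a\in\mathcal{P}}$ minimizes $\big[\sum_{i\in\mathcal{R}}\big(\sum_{a\in\mathcal{P}}|\hat y_{ia}-s_a|^p\big)^{q/p}\big]^{1/q}$ (ties broken by smallest Euclidean norm).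 Objectivity Assumption: $\bar x_{ia}=\bar x_{ja}$ for all $i,j\in\mathcal R$ and all $a\in\mathcal P$. Axioms (a method satisfies an axiom if the stated property holds for every admissible data set): Consensus: if for a paper $a$ we have $y_{ia}=y$ for all $i\in\mathcal R$, then $s_a=y$. Paper $a$ dominates paper $b$ if there is a permutation $\pi$ of $\mathcal R$ with $y_{ia}\ge y_{\pi(i)b}$ for all $i$; the domination is strict if at least one of these inequalities is strict. Efficiency: whenever $a$ dominates $b$, $s_a\ge s_b$. Consistency: Efficiency holds and, whenever $a$ strictly dominates $b$, $s_a>s_b$. *)

(* Defs.v *)
From HB Require Import structures.
From mathcomp Require Import all_boot all_order all_algebra all_fingroup.
From mathcomp Require Import all_classical all_reals.
From mathcomp Require Import exp.

Set Implicit Arguments.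
Unset Strict Implicit.
Unset Printing Implicit Defensive.

Import Order.TTheory GRing.Theory Num.Theory.
Local Open Scope ring_scope.

Section PeerReview.
Variables (R : realType) (n m d : nat).

(* Reviewers are 'I_n, papers are 'I_m, criteria are 'I_d. *)

Definition in_box (x : 'I_d -> R) : Prop := forall k, 0 <= x k <= 10.

(* h : [0,10]^d -> [0,10] monotonic (only its values on [0,10]^d matter). *)
Definition monotonic (h : ('I_d -> R) -> R) : Prop :=
  (forall x, in_box x -> 0 <= h x <= 10) /\
  (forall x y, in_box x -> in_box y -> (forall k, x k <= y k) -> h x <= h y).

Definition admissible (x : 'I_n -> 'I_m -> 'I_d -> R) (y : 'I_n -> 'I_m -> R) : Prop :=
  (forall i a, in_box (x i a)) /\
  exists h : 'I_n -> ('I_d -> R) -> R,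
    (forall i, monotonic (h i)) /\ (forall i a, y i a = h i (x i a)).

Definition objectivity (x : 'I_n -> 'I_m -> 'I_d -> R) : Prop :=
  forall i j a, x i a = x j a.

Definition Lpq (p q : R) (t v : 'I_n -> 'I_m -> R) : R :=
  powR (\sum_(i < n) powR (\sum_(a < m) powR `|t i a - v i a| p) (q / p)) (1 / q).

Definition norm2 (v : 'I_n -> 'I_m -> R) : R :=
  Num.sqrt (\sum_(i < n) \sum_(a < m) v i a ^+ 2).
Definition normvec (s : 'I_m -> R) : R :=
  Num.sqrt (\sum_(a < m) s a ^+ 2).

Definition values (x : 'I_n -> 'I_m -> 'I_d -> R) (h : ('I_d -> R) -> R) :
  'I_n -> 'I_m -> R := fun i a => h (x i a).

Definition ERM_output (p q : R) (x : 'I_n -> 'I_m -> 'I_d -> R)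
    (y : 'I_n -> 'I_m -> R) (yhat : 'I_n -> 'I_m -> R) : Prop :=
  (exists hh, monotonic hh /\ yhat = values x hh) /\
  (forall h, monotonic h -> Lpq p q y yhat <= Lpq p q y (values x h)) /\
  (forall h, monotonic h -> Lpq p q y (values x h) = Lpq p q y yhat ->
     norm2 yhat <= norm2 (values x h)).

Definition bcast (s : 'I_m -> R) : 'I_n -> 'I_m -> R := fun _ a => s a.

Definition Agg_output (p q : R) (yhat : 'I_n -> 'I_m -> R) (s : 'I_m -> R) : Prop :=
  (forall s', Lpq p q yhat (bcast s) <= Lpq p q yhat (bcast s')) /\
  (forall s', Lpq p q yhat (bcast s') = Lpq p q yhat (bcast s) ->
     normvec s <= normvec s').

Definition consensus (y : 'I_n -> 'I_m -> R) (s : 'I_m -> R) : Prop :=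
  forall a (y0 : R), (forall i, y i a = y0) -> s a = y0.

Definition dominates (y : 'I_n -> 'I_m -> R) (a b : 'I_m) : Prop :=
  exists pi : {perm 'I_n}, forall i, y (pi i) b <= y i a.

Definition strictly_dominates (y : 'I_n -> 'I_m -> R) (a b : 'I_m) : Prop :=
  exists pi : {perm 'I_n},
    (forall i, y (pi i) b <= y i a) /\ (exists i, y (pi i) b < y i a).

Definition efficiency (y : 'I_n -> 'I_m -> R) (s : 'I_m -> R) : Prop :=
  forall a b, dominates y a b -> s b <= s a.

Definition consistency (y : 'I_n -> 'I_m -> R) (s : 'I_m -> R) : Prop :=
  efficiency y s /\ (forall a b, strictly_dominates y a b -> s b < s a).

End PeerReview.

(* Main.v *)
Require Import Defs.
From HB Require Import structures.
From mathcomp Require Import all_boot all_order all_algebra all_fingroup.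
From mathcomp Require Import all_classical all_reals.
From mathcomp Require Import exp.
From mathcomp Require Import topology normedtype.
From mathcomp Require Import ring lra.
Import Order.TTheory GRing.Theory Num.Theory.
Import numFieldNormedType.Exports.
Local Open Scope ring_scope.
Set Implicit Arguments.
Unset Strict Implicit.

Section K.
Variable R : realType.
Implicit Types x y : R.

Definition kpos (a x : R) := powR (Num.max x 0) a.

Lemma max0_ge0 x : 0 <= Num.max x 0.
Proof. by rewrite le_max orbC le_refl. Qed.

Lemma kpos_ge0 a x : 0 <= kpos a x.
Proof. exact: powR_ge0. Qed.

Lemma kpos_le a x y : 0 < a -> x <= y -> kpos a x <= kpos a y.
Proof.
move=> a0 xy; rewrite /kpos; apply: ge0_ler_powR; first exact: ltW.
- by rewrite nnegrE max0_ge0.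
- by rewrite nnegrE max0_ge0.
- by rewrite ge_max le_max xy le_max le_refl !orbT.
Qed.

Lemma kpos_lt a x y : 0 < a -> 0 < y -> x < y -> kpos a x < kpos a y.
Proof.
move=> a0 y0 xy; rewrite /kpos; apply: gt0_ltr_powR => //.
- by rewrite nnegrE max0_ge0.
- by rewrite nnegrE max0_ge0.
- by rewrite lt_max gt_max xy y0.
Qed.

Lemma kpos_pos a x : 0 <= x -> kpos a x = powR x a.
Proof. by move=> x0; rewrite /kpos max_l. Qed.

Lemma kpos_neg a x : 0 < a -> x <= 0 -> kpos a x = 0.
Proof. by move=> a0 x0; rewrite /kpos max_r // powR0 // gt_eqF. Qed.

Lemma powR_inv_cancel (a b : R) : 0 < a -> 0 <= b -> powR (powR b a^-1) a = b.
Proof. by move=> a0 b0; rewrite -powRrM mulVf ?gt_eqF // powRr1. Qed.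

Lemma kpos_cont a : 0 < a -> continuous (kpos a).
Proof.
move=> a0 x; apply/cvgrPdist_lt => eps eps0.
apply/nbhs_ballP.
set A := kpos a x.
have A0 : 0 <= A by exact: kpos_ge0.
set U := powR (A + eps) a^-1.
have U0 : 0 < U by apply: powR_gt0; rewrite ltr_wpDl.
have kU : kpos a U = A + eps by rewrite kpos_pos ?ltW // powR_inv_cancel // addr_ge0 // ltW.
have xU : x < U.
  rewrite ltNge; apply/negP => Ux.
  have := kpos_le a0 Ux; rewrite kU -/A => h; clear -h eps0; lra.
have [Aeps|epsA] := ltP A eps.
  exists (U - x); first by rewrite /= subr_gt0.
  move=> y /=; rewrite /ball /= => hy.
  rewrite ltr_distlC; apply/andP; split.
    by apply: lt_le_trans (kpos_ge0 _ _); rewrite subr_lt0.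
  rewrite -kU; apply: kpos_lt => //.
  move: hy; rewrite ltr_distlC => /andP [_] ?; lra.
have Apos : 0 < A by apply: lt_le_trans epsA.
have x0 : 0 < x.
  rewrite ltNge; apply/negP => x0.
  by move: Apos; rewrite /A kpos_neg // ltxx.
set L := powR (A - eps) a^-1.
have L0 : 0 <= L by exact: powR_ge0.
have kL : kpos a L = A - eps by rewrite kpos_pos // powR_inv_cancel // subr_ge0.
have Lx : L < x.
  rewrite ltNge; apply/negP => xL.
  have := kpos_le a0 xL; rewrite kL -/A => h; clear -h eps0; lra.
exists (Num.min (U - x) (x - L)); first by rewrite /= lt_min !subr_gt0 xU Lx.
move=> y /=; rewrite /ball /= lt_min => /andP [hy1 hy2].
move: hy1 hy2; rewrite !ltr_distlC => /andP [h1 h2] /andP [h3 h4].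
have Ly : L < y by clear -h3; lra.
have yU : y < U by clear -h2; lra.
apply/andP; split.
  by rewrite -kL; apply: kpos_lt => //; apply: le_lt_trans L0 _.
by rewrite -kU; apply: kpos_lt.
Qed.
End K.

Section Phi.
Variable R : realType.
Variable p : R.
Hypothesis p1 : 1 < p.

Let p0 : 0 < p. Proof. have := p1; lra. Qed.
Let a0 : 0 < p - 1. Proof. have := p1; lra. Qed.
Ltac hyps := have hp1 := p1; have hp0 := p0; have ha0 := a0.

Definition phi (u : R) := kpos (p - 1) u - kpos (p - 1) (- u).
Definition G (u : R) := powR `|u| p.

Lemma G_ge0 u : 0 <= G u. Proof. hyps. exact: powR_ge0. Qed.
Lemma GN u : G (- u) = G u. Proof. hyps. by rewrite /G normrN. Qed.
Lemma phiN u : phi (- u) = - phi u. Proof. hyps. by rewrite /phi opprK opprB. Qed.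

Lemma phi_pos u : 0 <= u -> phi u = powR u (p - 1).
Proof.
hyps.
move=> u0; rewrite /phi kpos_pos // kpos_neg // ?subr0 //; lra.
Qed.

Lemma phi_ge0 u : 0 <= u -> 0 <= phi u.
Proof. hyps. by move=> u0; rewrite phi_pos // powR_ge0. Qed.

Lemma phi_le0 u : u <= 0 -> phi u <= 0.
Proof.
hyps.
move=> u0; rewrite -(opprK u) phiN oppr_le0 phi_ge0 //; lra.
Qed.

Lemma phi_lt u w : u < w -> phi u < phi w.
Proof.
hyps.
move=> uw; rewrite /phi.
have [w0|w0] := ltP 0 w.
  apply: ltr_leD; first exact: kpos_lt.
  rewrite lerN2; apply: kpos_le => //; lra.
apply: ler_ltD; first by apply: kpos_le => //; lra.
rewrite ltrN2; apply: kpos_lt => //; lra.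
Qed.

Lemma phi_le u w : u <= w -> phi u <= phi w.
Proof.
hyps.
rewrite le_eqVlt => /orP [/eqP -> //|/phi_lt /ltW //].
Qed.

Lemma phi_cont : continuous phi.
Proof.
hyps.
move=> x; apply: continuousB; first exact: kpos_cont.
apply: (@continuous_comp _ _ _ (fun u : R => - u) (kpos (p - 1))).
  exact: opp_continuous.
exact: kpos_cont.
Qed.

Lemma grad0 u w : 0 <= u -> G u + p * phi u * (w - u) <= G w.
Proof.
hyps.
move=> u0; rewrite phi_pos // /G (ger0_norm u0).
set B := powR u (p - 1).
have B0 : 0 <= B by exact: powR_ge0.
have uB : u * B = powR u p by rewrite mulr_powRB1.
set P := powR u p in uB *.
have P0 : 0 <= P by exact: powR_ge0.
have [w0|w0] := leP 0 w; last first.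
  have : p * B * w <= 0.
    rewrite -mulrA pmulr_rle0 //; apply: mulr_ge0_le0 => //; lra.
  have := powR_ge0 `|w| p; nra.
rewrite (ger0_norm w0).
set q := p / (p - 1).
have q0 : 0 < q by rewrite divr_gt0.
have pq : p^-1 + q^-1 = 1.
  rewrite /q invf_div; field; lra.
have Y := conjugate_powR w0 B0 p0 q0 pq.
have Bq : powR B q = P by rewrite /B -powRrM /q mulrC divfK //; lra.
rewrite Bq in Y.
have Y' : p * (w * B) <= powR w p + P * (p - 1).
  have -> : powR w p + P * (p - 1) = p * (powR w p / p + P / q).
    rewrite /q; field; lra.
  by rewrite ler_pM2l.
nra.
Qed.

Lemma grad u w : G u + p * phi u * (w - u) <= G w.
Proof.
hyps.
have [u0|u0] := leP 0 u; first exact: grad0.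
have := @grad0 (- u) (- w) (ltac:(lra)).
by rewrite !GN phiN; congr (_ <= _); ring.
Qed.

End Phi.

Lemma cont_sum (R : realType) (I : Type) (r : seq I) (f : I -> R -> R) :
  (forall i, continuous (f i)) -> continuous (fun t => \sum_(i <- r) f i t).
Proof.
move=> hf; elim: r => [|a r IH].
  have -> : (fun t : R => \sum_(i <- [::]) f i t) = (fun=> 0).
    by apply/funext => t; rewrite big_nil.
  exact: cst_continuous.
have -> : (fun t : R => \sum_(i <- a :: r) f i t) = (f a + (fun t => \sum_(i <- r) f i t)).
  by apply/funext => t; rewrite big_cons.
by move=> x; apply: continuousD; [exact: hf | exact: IH].
Qed.

Section Psi.
Variable R : realType.
Variable p : R.
Hypothesis p1 : 1 < p.
Variable n : nat.
Hypothesis n0 : (0 < n)%N.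

Definition Psi (v : 'I_n -> R) (t : R) := \sum_(i < n) phi p (v i - t).
Definition F (v : 'I_n -> R) (t : R) := \sum_(i < n) G p (v i - t).

Lemma Psi_cont v : continuous (Psi v).
Proof.
apply: cont_sum => i x.
apply: (@continuous_comp _ _ _ (fun t : R => v i - t) (phi p)).
  apply: continuousB; [exact: cst_continuous | exact: cvg_id].
exact: phi_cont.
Qed.

Lemma Psi_lt v t t' : t < t' -> Psi v t' < Psi v t.
Proof.
move=> tt'; apply: ltr_sum.
  by apply/hasP; exists (Ordinal n0); rewrite ?mem_index_enum.
move=> i _; apply: phi_lt => //; lra.
Qed.

Lemma Psi_le v t t' : t <= t' -> Psi v t' <= Psi v t.
Proof.
move=> tt'; apply: ler_sum => i _; apply: phi_le => //; lra.
Qed.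

Lemma Psi_mono v v' t : (forall i, v i <= v' i) -> Psi v t <= Psi v' t.
Proof.
move=> h; apply: ler_sum => i _; apply: phi_le => //; have := h i; lra.
Qed.

Lemma Psi_mono_lt v v' t k : (forall i, v i <= v' i) -> v k < v' k ->
  Psi v t < Psi v' t.
Proof.
move=> h hk; rewrite /Psi (bigD1 k) //= [X in _ < X](bigD1 k) //=.
apply: ltr_leD; first by apply: phi_lt => //; lra.
apply: ler_sum => i _; apply: phi_le => //; have := h i; lra.
Qed.

Lemma root_exists v : (forall i, 0 <= v i <= 10) ->
  exists c, 0 <= c <= 10 /\ Psi v c = 0.
Proof.
move=> hv.
have h0 : 0 <= Psi v 0.
  apply: sumr_ge0 => i _; apply: phi_ge0 => //; have := hv i; move/andP => [? ?]; lra.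
have h10 : Psi v 10 <= 0.
  apply: sumr_le0 => i _; apply: phi_le0 => //; have := hv i; move/andP => [? ?]; lra.
have l010 : (0:R) <= 10 by lra.
have hb : Num.min (Psi v 0) (Psi v 10) <= 0 <= Num.max (Psi v 0) (Psi v 10).
  by rewrite ge_min le_max h10 h0 orbT.
have [c hc hPc] := @IVT R (Psi v) 0 10 0 l010 (continuous_subspaceT (@Psi_cont v)) hb.
exists c; split => //.
Qed.

Lemma F_min_of_root v c : Psi v c = 0 -> forall t, F v c <= F v t.
Proof.
move=> hc t.
have h : \sum_(i < n) (G p (v i - c) + p * phi p (v i - c) * (c - t)) <= F v t.
  apply: ler_sum => i _.
  have := grad p1 (v i - c) (v i - t).
  by have -> : v i - t - (v i - c) = c - t by ring.
move: h; rewrite big_split /= -mulr_suml -mulr_sumr -/(Psi v c) hc.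
by rewrite mulr0 mul0r addr0.
Qed.

Lemma grad_sum v t m : F v t + p * Psi v t * (t - m) <= F v m.
Proof.
have h : \sum_(i < n) (G p (v i - t) + p * phi p (v i - t) * (t - m)) <= F v m.
  apply: ler_sum => i _.
  have := grad p1 (v i - t) (v i - m).
  by have -> : v i - m - (v i - t) = t - m by ring.
by move: h; rewrite big_split /= -mulr_suml -mulr_sumr.
Qed.

Lemma min_left v m t : F v m <= F v t -> t < m -> 0 <= Psi v t.
Proof.
move=> hm tm; have hg := grad_sum v t m; have hp1 := p1.
rewrite leNgt; apply/negP => hP.
move: hg hP; set P := Psi v t => hg hP.
have hpp : 0 < p * (- P) by apply: mulr_gt0; lra.
have : 0 < p * (- P) * (m - t) by apply: mulr_gt0 => //; lra.
have -> : p * (- P) * (m - t) = p * P * (t - m) by ring.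
lra.
Qed.

Lemma min_right v m t : F v m <= F v t -> m < t -> Psi v t <= 0.
Proof.
move=> hm tm; have hg := grad_sum v t m; have hp1 := p1.
rewrite leNgt; apply/negP => hP.
move: hg hP; set P := Psi v t => hg hP.
have hpp : 0 < p * P by apply: mulr_gt0; lra.
have : 0 < p * P * (t - m) by apply: mulr_gt0 => //; lra.
lra.
Qed.

Lemma Psi_perm (pi : {perm 'I_n}) v t : Psi (fun i => v (pi i)) t = Psi v t.
Proof.
by rewrite /Psi [in RHS](reindex_inj (@perm_inj _ pi)).
Qed.

End Psi.

Section LossLemmas.
Variable R : realType.

Lemma sum_lt1 (I : finType) (f g : I -> R) k :
  (forall i, f i <= g i) -> f k < g k -> \sum_i f i < \sum_i g i.
Proof.
move=> h hk; rewrite (bigD1 k) //= [X in _ < X](bigD1 k) //=.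
by apply: ltr_leD => //; apply: ler_sum => i _.
Qed.

Lemma sum_eq_of_le (I : finType) (f g : I -> R) :
  (forall i, f i <= g i) -> \sum_i g i <= \sum_i f i -> forall i, f i = g i.
Proof.
move=> h hs i; apply/eqP; rewrite eq_le h /=.
rewrite leNgt; apply/negP => lt.
by have := sum_lt1 h lt; rewrite ltNge hs.
Qed.

Variables n m : nat.
Implicit Types t v w : 'I_n -> 'I_m -> R.

Lemma Lpq_ge0 p q t v : 0 <= Lpq p q t v.
Proof. exact: powR_ge0. Qed.

Lemma Lpq_eq0 p q t v : Lpq p q t v = 0 -> forall i a, t i a = v i a.
Proof.
rewrite /Lpq => /powR_eq0_eq0 h i a.
have h1 := psumr_eq0P (fun i _ => powR_ge0 _ _) h (i := i) isT.
have h2 := psumr_eq0P (fun a _ => powR_ge0 _ _) (powR_eq0_eq0 h1) (i := a) isT.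
by move/powR_eq0_eq0/normr0_eq0/eqP: h2; rewrite subr_eq0 => /eqP.
Qed.

Lemma Lpq_eq p q t v : 0 < p -> 0 < q -> (forall i a, t i a = v i a) ->
  Lpq p q t v = 0.
Proof.
move=> p0 q0 h; rewrite /Lpq.
rewrite (eq_bigr (fun=> 0)); first by rewrite big1 // powR0 // div1r invr_eq0 gt_eqF.
move=> i _; rewrite (eq_bigr (fun=> 0)); first by rewrite big1 // powR0 // mulf_neq0 ?invr_eq0 ?gt_eqF.
by move=> a _; rewrite h subrr normr0 powR0 // gt_eqF.
Qed.

Lemma Lpq_lt p q t v w k b : 0 < p -> 0 < q ->
  (forall i a, `|t i a - v i a| <= `|t i a - w i a|) ->
  `|t k b - v k b| < `|t k b - w k b| -> Lpq p q t v < Lpq p q t w.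
Proof.
move=> p0 q0 h hk; rewrite /Lpq.
have qp0 : 0 < q / p by rewrite divr_gt0.
apply: gt0_ltr_powR; first by rewrite div1r invr_gt0.
- by rewrite nnegrE; apply: sumr_ge0 => i _; exact: powR_ge0.
- by rewrite nnegrE; apply: sumr_ge0 => i _; exact: powR_ge0.
have le1 : forall i, \sum_a `|t i a - v i a| `^ p <= \sum_a `|t i a - w i a| `^ p.
  move=> i; apply: ler_sum => a _; apply: ge0_ler_powR => //; first exact: ltW.
apply: (@sum_lt1 _ _ _ k).
  move=> i; apply: ge0_ler_powR => //; first exact: ltW.
  - by rewrite nnegrE; apply: sumr_ge0 => a _; exact: powR_ge0.
  - by rewrite nnegrE; apply: sumr_ge0 => a _; exact: powR_ge0.
apply: gt0_ltr_powR => //.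
- by rewrite nnegrE; apply: sumr_ge0 => a _; exact: powR_ge0.
- by rewrite nnegrE; apply: sumr_ge0 => a _; exact: powR_ge0.
apply: (@sum_lt1 _ _ _ b).
  move=> a; apply: ge0_ler_powR => //; first exact: ltW.
by apply: gt0_ltr_powR.
Qed.

Lemma Lpp p t v : 0 < p ->
  Lpq p p t v = powR (\sum_i \sum_a G p (t i a - v i a)) (1 / p).
Proof.
move=> p0; rewrite /Lpq divff ?gt_eqF //; congr powR.
apply: eq_bigr => i _; rewrite powRr1 //.
by apply: sumr_ge0 => a _; exact: powR_ge0.
Qed.

End LossLemmas.

Section MonoLemmas.
Variables (R : realType) (d n : nat).

Lemma mono_max (h1 h2 : ('I_d -> R) -> R) :
  monotonic h1 -> monotonic h2 -> monotonic (fun z => Num.max (h1 z) (h2 z)).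
Proof.
move=> [r1 m1] [r2 m2]; split.
  move=> z hz; have /andP [a1 b1] := r1 z hz; have /andP [a2 b2] := r2 z hz.
  by rewrite le_max a1 ge_max b1 b2.
move=> z z' hz hz' hzz.
by rewrite ge_max !le_max (m1 _ _ hz hz' hzz) (m2 _ _ hz hz' hzz) !orbT.
Qed.

Lemma mono_min (h1 h2 : ('I_d -> R) -> R) :
  monotonic h1 -> monotonic h2 -> monotonic (fun z => Num.min (h1 z) (h2 z)).
Proof.
move=> [r1 m1] [r2 m2]; split.
  move=> z hz; have /andP [a1 b1] := r1 z hz; have /andP [a2 b2] := r2 z hz.
  by rewrite le_min a1 a2 ge_min b1.
move=> z z' hz hz' hzz.
by rewrite le_min !ge_min (m1 _ _ hz hz' hzz) (m2 _ _ hz hz' hzz) !orbT.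
Qed.

Lemma mono_bigmax (hf : 'I_n -> ('I_d -> R) -> R) :
  (forall j, monotonic (hf j)) -> monotonic (fun z => \big[Num.max/0]_(j < n) hf j z).
Proof.
move=> hm; split.
  move=> z hz; apply/andP; split; first exact: bigmax_ge_id.
  apply: bigmax_le => [|j _]; first by rewrite ler0n.
  by have /andP [] := (hm j).1 z hz.
move=> z z' hz hz' hzz; apply: le_bigmax2 => j _; exact: (hm j).2.
Qed.

Lemma mono_bigmin (hf : 'I_n -> ('I_d -> R) -> R) :
  (forall j, monotonic (hf j)) -> monotonic (fun z => \big[Num.min/10]_(j < n) hf j z).
Proof.
move=> hm; split.
  move=> z hz; apply/andP; split; last exact: bigmin_le_id.
  apply: le_bigmin => [|j _]; first by rewrite ler0n.
  by have /andP [] := (hm j).1 z hz.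
move=> z z' hz hz' hzz; apply: le_bigmin2 => j _; exact: (hm j).2.
Qed.

Lemma clip_min (yv g M : R) : yv <= M -> `|yv - Num.min g M| <= `|yv - g|.
Proof.
move=> h; have [gM|Mg] := leP g M; first by [].
rewrite !ler0_norm ?subr_le0 //; try lra.
Qed.

Lemma clip_max (yv g M : R) : M <= yv -> `|yv - Num.max g M| <= `|yv - g|.
Proof.
move=> h; have [gM|Mg] := leP g M; last by [].
rewrite !ger0_norm ?subr_ge0 //; lra.
Qed.

End MonoLemmas.

Unset Implicit Arguments.

Theorem theorem3p1 (R : realType) (n m d : nat) (p q : R)
    (x : 'I_n -> 'I_m -> 'I_d -> R) (y : 'I_n -> 'I_m -> R)
    (yhat : 'I_n -> 'I_m -> R) (s : 'I_m -> R) :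
  (0 < n)%N -> (0 < d)%N -> 1 < p -> 1 < q ->
  admissible x y -> objectivity x ->
  ERM_output p q x y yhat -> Agg_output p q yhat s ->
  consensus y s /\ (p = q -> consistency y s).
Proof.
move=> n0 d0 p1 q1 [xbox [hf [hfm hy]]] obj [[hh [hhm hyhat]] [ermopt _]] [aggopt _].
pose i0 : 'I_n := Ordinal n0.
pose g a := hh (x i0 a).
have p0 : 0 < p by lra.
have q0 : 0 < q by lra.
have xE : forall i a, x i a = x i0 a by move=> i a; apply: obj.
have yhatE : forall i a, yhat i a = g a by move=> i a; rewrite hyhat /values xE.
have yE : forall i a, y i a = hf i (x i0 a) by move=> i a; rewrite hy xE.
have yr : forall i a, 0 <= y i a <= 10.
  by move=> i a; rewrite yE; apply: (hfm i).1; exact: xbox.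
have gr : forall a, 0 <= g a <= 10 by move=> a; apply: hhm.1; exact: xbox.
have sE : forall a, s a = g a.
  have h := aggopt g.
  have z : Lpq p q yhat (bcast g) = 0 by apply: Lpq_eq => // i a; rewrite yhatE.
  rewrite z in h.
  have h0 : Lpq p q yhat (bcast s) = 0 by apply/le_anti; rewrite h Lpq_ge0.
  by move=> a; have := Lpq_eq0 h0 i0 a; rewrite yhatE /bcast => ->.
split.
- move=> a y0 hya; rewrite sE.
  have /andP [y00 y010] : 0 <= y0 <= 10 by rewrite -(hya i0).
  have [glt|ggt|//] := ltgtP (g a) y0.
  + pose Mn z := \big[Num.min/10]_(j < n) hf j z.
    pose h' z := Num.max (hh z) (Mn z).
    have hm' : monotonic h' by apply: mono_max => //; apply: mono_bigmin.
    exfalso; move: (ermopt h' hm'); apply/negP; rewrite -ltNge.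
    apply: (@Lpq_lt _ _ _ _ _ _ _ _ i0 a p0 q0).
      move=> i b; rewrite yhatE /values /h' (xE i b) -/(g b).
      apply: clip_max; rewrite yE; exact: bigmin_le.
    rewrite yhatE /values /h' -/(g a).
    have -> : Mn (x i0 a) = y0.
      apply/le_anti/andP; split.
        by rewrite -(hya i0) yE; exact: bigmin_le.
      by apply: le_bigmin => // j _; rewrite -yE hya.
    rewrite max_r ?(ltW glt) // hya subrr normr0 normr_gt0 subr_eq0.
    by rewrite (gt_eqF glt).
  + pose Mx z := \big[Num.max/0]_(j < n) hf j z.
    pose h' z := Num.min (hh z) (Mx z).
    have hm' : monotonic h' by apply: mono_min => //; apply: mono_bigmax.
    exfalso; move: (ermopt h' hm'); apply/negP; rewrite -ltNge.
    apply: (@Lpq_lt _ _ _ _ _ _ _ _ i0 a p0 q0).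
      move=> i b; rewrite yhatE /values /h' (xE i b) -/(g b).
      apply: clip_min; rewrite yE; exact: le_bigmax.
    rewrite yhatE /values /h' -/(g a).
    have -> : Mx (x i0 a) = y0.
      apply/le_anti/andP; split.
        by apply: bigmax_le => // j _; rewrite -yE hya.
      by rewrite -(hya i0) yE; exact: le_bigmax.
    rewrite min_r ?(ltW ggt) // hya subrr normr0 normr_gt0 subr_eq0.
    by rewrite (lt_eqF ggt).
- move=> pq; subst q.
  have Cex : forall z : 'I_d -> R, exists c, in_box z ->
      0 <= c <= 10 /\ Psi p (fun i => hf i z) c = 0.
    move=> z; have [hz|hz] := pselect (in_box z); last by exists 0.
    have [c hc] := root_exists p1 (fun i => (hfm i).1 z hz).
    by exists c.
  have [Cz hCz] := choice Cex.
  have Cm : monotonic Cz.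
    split; first by move=> z hz; have [] := hCz z hz.
    move=> z z' hz hz' hzz; rewrite leNgt; apply/negP => lt.
    have h1 := Psi_lt p1 n0 (fun i => hf i z) lt.
    have h2 : Psi p (fun i => hf i z) (Cz z') <= Psi p (fun i => hf i z') (Cz z').
      by apply: Psi_mono => // i; apply: (hfm i).2.
    have [_ e1] := hCz z hz; have [_ e2] := hCz z' hz'.
    rewrite e1 in h1; rewrite e2 in h2.
    by have := lt_le_trans h1 h2; rewrite ltxx.
  pose col a := fun i => y i a.
  pose c a := Cz (x i0 a).
  have colE : forall a, col a = (fun i => hf i (x i0 a)).
    by move=> a; apply/funext => i; rewrite /col yE.
  have cr : forall a, Psi p (col a) (c a) = 0.
    by move=> a; rewrite colE; have [] := hCz _ (xbox i0 a).
  have key : forall h, monotonic h ->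
      \sum_a F p (col a) (g a) <= \sum_a F p (col a) (h (x i0 a)).
    move=> h hm; have := ermopt h hm; rewrite !Lpp //.
    have e1 : \sum_i \sum_a G p (y i a - yhat i a) = \sum_a F p (col a) (g a).
      by rewrite exchange_big; apply: eq_bigr => a _; apply: eq_bigr => i _; rewrite yhatE.
    have e2 : \sum_i \sum_a G p (y i a - values x h i a) = \sum_a F p (col a) (h (x i0 a)).
      by rewrite exchange_big; apply: eq_bigr => a _; apply: eq_bigr => i _; rewrite /values (xE i a).
    rewrite e1 e2 => hle; rewrite leNgt; apply/negP => lt.
    have ip : 0 < 1 / p by rewrite div1r invr_gt0.
    have nn1 : \sum_a F p (col a) (h (x i0 a)) \is Num.nneg.
      by rewrite nnegrE; apply: sumr_ge0 => a _; apply: sumr_ge0 => i _; exact: G_ge0.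
    have nn2 : \sum_a F p (col a) (g a) \is Num.nneg.
      by rewrite nnegrE; apply: sumr_ge0 => a _; apply: sumr_ge0 => i _; exact: G_ge0.
    have := gt0_ltr_powR ip nn1 nn2 lt.
    by rewrite ltNge hle.
  have gc : forall a, g a = c a.
    move=> a; apply/le_anti/andP; split.
    + rewrite leNgt; apply/negP => lt.
      pose h1 z := Num.min (hh z) (Cz z).
      have hm1 : monotonic h1 by apply: mono_min.
      have hk := key h1 hm1.
      have hle : forall b, F p (col b) (h1 (x i0 b)) <= F p (col b) (g b).
        move=> b; rewrite /h1 -/(g b) -/(c b); have [gb|gb] := leP (g b) (c b); first by [].
        exact: (F_min_of_root p1 (cr b) (g b)).
      have eq := sum_eq_of_le hle hk a.
      move: eq; rewrite /h1 -/(g a) -/(c a) min_r ?(ltW lt) // => eq.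
      have tl : (c a + g a) / 2 < g a by lra.
      have tr : c a < (c a + g a) / 2 by lra.
      have hmin : F p (col a) (g a) <= F p (col a) ((c a + g a) / 2).
        by rewrite -eq; exact: (F_min_of_root p1 (cr a) _).
      have hP := min_left p1 hmin tl.
      have hP2 := Psi_lt p1 n0 (col a) tr.
      rewrite cr in hP2; lra.
    + rewrite leNgt; apply/negP => lt.
      pose h1 z := Num.max (hh z) (Cz z).
      have hm1 : monotonic h1 by apply: mono_max.
      have hk := key h1 hm1.
      have hle : forall b, F p (col b) (h1 (x i0 b)) <= F p (col b) (g b).
        move=> b; rewrite /h1 -/(g b) -/(c b); have [gb|gb] := leP (g b) (c b); last by [].
        exact: (F_min_of_root p1 (cr b) (g b)).
      have eq := sum_eq_of_le hle hk a.
      move: eq; rewrite /h1 -/(g a) -/(c a) max_r ?(ltW lt) // => eq.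
      have tl : g a < (c a + g a) / 2 by lra.
      have tr : (c a + g a) / 2 < c a by lra.
      have hmin : F p (col a) (g a) <= F p (col a) ((c a + g a) / 2).
        by rewrite -eq; exact: (F_min_of_root p1 (cr a) _).
      have hP := min_right p1 hmin tl.
      have hP2 := Psi_lt p1 n0 (col a) tr.
      rewrite cr in hP2; lra.
  have root : forall a, Psi p (col a) (s a) = 0 by move=> a; rewrite sE gc.
  split.
  + move=> a b [pi hpi]; rewrite leNgt; apply/negP => lt.
    have h1 := Psi_lt p1 n0 (col b) lt.
    have h2 : Psi p (col b) (s a) <= Psi p (col a) (s a).
      by rewrite -(Psi_perm p pi (col b)); apply: Psi_mono => // i; exact: hpi i.
    rewrite !root in h1 h2; lra.
  + move=> a b [pi [hpi [k hk]]]; rewrite ltNge; apply/negP => le.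
    have h1 := Psi_le p1 (col b) le.
    have h2 : Psi p (col b) (s a) < Psi p (col a) (s a).
      by rewrite -(Psi_perm p pi (col b)); exact: (@Psi_mono_lt R p p1 n (fun i => col b (pi i)) (col a) (s a) k (fun i => hpi i) hk).
    rewrite !root in h1 h2; lra.
Qed.
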